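(* Let $\lambda\in\mathbb R$ and $\alpha,\beta\in\mathbb R$ with $\tau\bar\tau:=\alpha^2-\lambda\beta^2\neq 0$. Let $A,B,C:\mathfrak g\to\mathfrak g$ be linear maps with $A^t=-A$ and $C^t=-C$, and let $r'$ be the antisymmetric element of $\mathfrak g_\lambda\otimes\mathfrak g_\lambda$ determined by $(A,B,C)$ as in the context. Then $r=r'+K_\tau$ is a compatible $r$-matrix (i.e. satisfies the classical Yang–Baxter equation $[[r,r]]=0$) if $A,B,C$ satisfy the coupled equations \begin{align*} \tfrac12\,\mathrm{tr}(A^2)-\tfrac{\lambda}{2}\big(\mathrm{tr}(B)^2-\mathrm{tr}(B^2)\big)&=\mu\lambda,\\ \mathrm{tr}(CB)&=\nu,\\ (B-\mathrm{tr}(B)\,\mathrm{id})(B+B^t)+\tfrac12\big(\mathrm{tr}(B)^2-\mathrm{tr}(B^2)\big)\mathrm{id}-CA+\lambda\big(C^2-\tfrac12\mathrm{tr}(C^2)\,\mathrm{id}\big)&=-\mu\,\mathrm{id},\\ -A(B+B^t)+(B^t-\mathrm{tr}(B)\,\mathrm{id})(\lambda C-A)-\mathrm{tr}(AB)\,\mathrm{id}&=-\lambda\nu\,\mathrm{id}. \end{align*}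
   Context: Let $\mathfrak g$ denote either $so(3)$ or $so(2,1)$, with basis $J_0,J_1,J_2$ and metric $\eta=\mathrm{diag}(1,1,1)$ (for $so(3)$) or $\eta=\mathrm{diag}(1,-1,-1)$ (for $so(2,1)$); indices are raised and lowered with $\eta$, summation over repeated indices is implied, $\epsilon_{abc}$ is totally antisymmetric with $\epsilon_{012}=\epsilon^{012}=1$, and $[J_a,J_b]=\epsilon_{abc}J^c$. The inner product on $\mathfrak g$ is $\langle J_a,J_b\rangle=\eta_{ab}$. For a linear map $F:\mathfrak g\to\mathfrak g$, $F^t$ denotes its transpose with respect to $\langle\cdot,\cdot\rangle$ (i.e. $\langle v,Fw\rangle=\langle F^tv,w\rangle$); for $v\in\mathfrak g$, $v^t=\langle v,\cdot\rangle$, so $vu^t$ is the map $X\mapsto\langle u,X\rangle v$; $[u,\cdot]$ is the map $X\mapsto[u,X]$; $\mathrm{id}$ is the identity and $\mathrm{tr}$ the trace. For $\lambda\in\mathbb R$, $\mathfrak g_\lambda$ is the real six-dimensional Lie algebra with basis $J_a,P_a$ ($a=0,1,2$) and brackets $[J_a,J_b]=\epsilon_{abc}J^c$, $[J_a,P_b]=\epsilon_{abc}P^c$, $[P_a,P_b]=\lambda\epsilon_{abc}J^c$. For real $\alpha,\beta$ with $\tau\bar\tau:=\alpha^2-\lambda\beta^2\neq0$ set $K_\tau=\frac{\alpha}{\tau\bar\tau}(J_a\otimes P^a+P_a\otimes J^a)-\frac{\beta}{\tau\bar\tau}(\lambda J_a\otimes J^a+P_a\otimes P^a)$ (the Casimir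 of the invariant form $\alpha t+\beta s$, where $t(J_a,P_b)=\eta_{ab}$, $t(J_a,J_b)=t(P_a,P_b)=0$, $s(J_a,J_b)=\eta_{ab}$, $s(J_a,P_b)=0$, $s(P_a,P_b)=\lambda\eta_{ab}$), and $\mu=\frac{\alpha^2+\lambda\beta^2}{(\tau\bar\tau)^2}$, $\nu=-\frac{2\alpha\beta}{(\tau\bar\tau)^2}$. For $r=\sum_i x_i\otimes y_i\in\mathfrak g_\lambda\otimes\mathfrak g_\lambda$ put $r_{12}=\sum_i x_i\otimes y_i\otimes1$, $r_{13}=\sum_i x_i\otimes1\otimes y_i$, $r_{23}=\sum_i1\otimes x_i\otimes y_i$ and $[[r,r]]=[r_{12},r_{13}]+[r_{12},r_{23}]+[r_{13},r_{23}]$; the classical Yang–Baxter equation is $[[r,r]]=0$. An element $r\in\mathfrak g_\lambda\otimes\mathfrak g_\lambda$ is called a compatible $r$-matrix if $r=r'+K_\tau$ with $r'$ antisymmetric and $[[r,r]]=0$ (equivalently $[[r',r']]=-[[K_\tau,K_\tau]]$). Given linear maps $A,B,C:\mathfrak g\to\mathfrak g$ with $A^t=-A$, $C^t=-C$, write $M_{ba}=\langle J_b,M(J_a)\rangle$ for the matrix entries of $M\in\{A,B,C\}$, and define the antisymmetric element $r'=A_{ba}\,J^a\otimes J^b+B_{ba}\,(P^a\otimes J^b-J^b\otimes P^a)+C_{ba}\,P^a\otimes P^b$. *)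

(* Defs.v *)
From HB Require Import structures.
From mathcomp Require Import all_boot all_order all_algebra.
Set Implicit Arguments. Unset Strict Implicit. Unset Printing Implicit Defensive.
Import Order.TTheory GRing.Theory Num.Theory.
Local Open Scope ring_scope.

(* The two real forms: so(3) with eta = diag(1,1,1), so(2,1) with eta = diag(1,-1,-1). *)
Inductive galg := so3 | so21.

Section Defs.
Variable R : realFieldType.

(* diagonal entries eta_{aa} of the metric (lower indices) *)
Definition eta (g : galg) (a : 'I_3) : R :=
  match g with so3 => 1 | so21 => if a == ord0 then 1 else -1 end.
(* eta^{aa} (upper indices), inverse metric *)
Definition etaU (g : galg) (a : 'I_3) : R := (eta g a)^-1.
Definition etaM (g : galg) : 'M[R]_3 := \matrix_(i, j) (if i == j then eta g i else 0).

Definition eps (a b c : 'I_3) : R :=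
  match nat_of_ord a, nat_of_ord b, nat_of_ord c with
  | O, S O, S (S O) | S O, S (S O), O | S (S O), O, S O => 1
  | O, S (S O), S O | S (S O), S O, O | S O, O, S (S O) => -1
  | _, _, _ => 0
  end.

(* Linear maps g -> g are 3x3 matrices M acting on coordinates w.r.t. J_0,J_1,J_2:
   M(J_a) = sum_c M c a J_c.  Composition is *m, identity 1%:M, trace \tr. *)
(* transpose w.r.t. <.,.> : <v, F w> = <F^t v, w> *)
Definition gtr (g : galg) (M : 'M[R]_3) : 'M[R]_3 := invmx (etaM g) *m M^T *m etaM g.
(* matrix entries M_{ba} = <J_b, M(J_a)> *)
Definition ment (g : galg) (M : 'M[R]_3) (b a : 'I_3) : R := (etaM g *m M) b a.

(* Basis of g_lambda: (false, a) is J_a, (true, a) is P_a. *)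
Definition bidx := (bool * 'I_3)%type.

(* structure constants: coefficient of basis element z in [x, y] in g_lambda *)
Definition sconst (g : galg) (lam : R) (x y z : bidx) : R :=
  let: (px, a) := x in let: (py, b) := y in let: (pz, c) := z in
  match px, py, pz with
  | false, false, false => eps a b c * etaU g c        (* [J_a,J_b] = eps_abc J^c *)
  | false, true, true | true, false, true => eps a b c * etaU g c
                                                       (* [J_a,P_b] = eps_abc P^c *)
  | true, true, false => lam * eps a b c * etaU g c    (* [P_a,P_b] = lam eps_abc J^c *)
  | _, _, _ => 0
  end.

(* elements of g_lambda (x) g_lambda as coefficient arrays r x y (coefficient of e_x (x) e_y);
   the classical Yang-Baxter expression [[r,r]] as a coefficient array on three slots *)
Definition cybe (g : galg) (lam : R) (r : bidx -> bidx -> R) (a b c : bidx) : R :=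
  (\sum_(x : bidx) \sum_(y : bidx) r x b * r y c * sconst g lam x y a)   (* [r12,r13] *)
+ (\sum_(x : bidx) \sum_(y : bidx) r a x * r y c * sconst g lam x y b)   (* [r12,r23] *)
+ (\sum_(x : bidx) \sum_(y : bidx) r a x * r b y * sconst g lam x y c).  (* [r13,r23] *)

Definition Ktau (g : galg) (lam al be : R) (x y : bidx) : R :=
  let tt := al ^+ 2 - lam * be ^+ 2 in
  let: (px, a) := x in let: (py, b) := y in
  if a == b then
    match px, py with
    | false, true | true, false => al / tt * etaU g a
    | false, false => - (be / tt) * lam * etaU g a
    | true, true => - (be / tt) * etaU g a
    end
  else 0.

(* r' = A_{ba} J^a(x)J^b + B_{ba}(P^a(x)J^b - J^b(x)P^a) + C_{ba} P^a(x)P^b *)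
Definition rprime (g : galg) (A B C : 'M[R]_3) (x y : bidx) : R :=
  let: (px, a) := x in let: (py, b) := y in
  match px, py with
  | false, false => ment g A b a * etaU g a * etaU g b
  | true, false => ment g B b a * etaU g a * etaU g b
  | false, true => - (ment g B a b * etaU g b * etaU g a)
  | true, true => ment g C b a * etaU g a * etaU g b
  end.

Definition mu (lam al be : R) : R :=
  (al ^+ 2 + lam * be ^+ 2) / (al ^+ 2 - lam * be ^+ 2) ^+ 2.
Definition nu (lam al be : R) : R :=
  - (2 * al * be) / (al ^+ 2 - lam * be ^+ 2) ^+ 2.

End Defs.

(* Main.v *)
Require Import Defs.
From HB Require Import structures.
From mathcomp Require Import all_boot all_order all_algebra ring lra.
Import Order.TTheory GRing.Theory Num.Theory.
Local Open Scope ring_scope.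
Set Implicit Arguments. Unset Strict Implicit.
Definition o0 : 'I_3 := @Ordinal 3 0 isT.
Definition o1 : 'I_3 := @Ordinal 3 1 isT.
Definition o2 : 'I_3 := @Ordinal 3 2 isT.
Lemma sum3 (R : nmodType) (F : 'I_3 -> R) : \sum_(i < 3) F i = F o0 + F o1 + F o2.
Proof. rewrite !big_ord_recr big_ord0 /= add0r; congr (F _ + F _ + F _); exact: val_inj. Qed.
Lemma sumb (R : nmodType) (F : bidx -> R) : \sum_(x : bidx) F x =
  F (false,o0) + F (false,o1) + F (false,o2) + F (true,o0) + F (true,o1) + F (true,o2).
Proof.
transitivity (\sum_(b : bool) \sum_(i < 3) F (b,i)).
  rewrite pair_big /=. apply: eq_big => //. by case.
by rewrite big_bool /= !sum3 addrC !addrA.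
Qed.
Lemma ord3_cases (i : 'I_3) : i = o0 \/ i = o1 \/ i = o2.
Proof. case: i => [[|[|[|m]]] H]; [left|right;left|right;right|by []]; exact: val_inj. Qed.
Lemma bidx_cases (x : bidx) : x = (false,o0) \/ x = (false,o1) \/ x = (false,o2) \/
   x = (true,o0) \/ x = (true,o1) \/ x = (true,o2).
Proof. by case: x => [[] i]; case: (ord3_cases i) => [|[]] ->; tauto. Qed.

Section S.
Variable R : realFieldType.
Definition mk3 (x00 x01 x02 x10 x11 x12 x20 x21 x22 : R) : 'M[R]_3 :=
  \matrix_(i, j) nth 0 (nth [::] [:: [:: x00; x01; x02]; [:: x10; x11; x12]; [:: x20; x21; x22]] i) j.
Definition Amat g (s0 s1 s2 : R) := mk3 0 s2 (-s1) (-(Defs.eta R g o1 * s2)) 0 (Defs.eta R g o1 * s0)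
   (Defs.eta R g o2 * s1) (-(Defs.eta R g o2 * s0)) 0.
Definition Kt (g : galg) (lam al be t : R) (x y : bidx) : R :=
  let: (px, a) := x in let: (py, b) := y in
  if a == b then
    match px, py with
    | false, true | true, false => al * t * etaU R g a
    | false, false => - (be * t) * lam * etaU R g a
    | true, true => - (be * t) * etaU R g a
    end
  else 0.
End S.

Section Tabs.
Variable R : realFieldType.
Definition rtab_so3 (lam al be t s0 s1 s2 c0 c1 c2 b00 b01 b02 b10 b11 b12 b20 b21 b22 : R) (u v : bidx) : R :=
  match u.1, nat_of_ord u.2, v.1, nat_of_ord v.2 with
  | false, 0, false, 0 => (- (lam * be * t))
  | false, 0, false, 1 => (- (s2))
  | false, 0, false, 2 => ((s1))
  | false, 0, true, 0 => (- (b00) + (al * t))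
  | false, 0, true, 1 => (- (b01))
  | false, 0, true, 2 => (- (b02))
  | false, 1, false, 0 => ((s2))
  | false, 1, false, 1 => (- (lam * be * t))
  | false, 1, false, 2 => (- (s0))
  | false, 1, true, 0 => (- (b10))
  | false, 1, true, 1 => (- (b11) + (al * t))
  | false, 1, true, 2 => (- (b12))
  | false, 2, false, 0 => (- (s1))
  | false, 2, false, 1 => ((s0))
  | false, 2, false, 2 => (- (lam * be * t))
  | false, 2, true, 0 => (- (b20))
  | false, 2, true, 1 => (- (b21))
  | false, 2, true, 2 => (- (b22) + (al * t))
  | true, 0, false, 0 => ((b00) + (al * t))
  | true, 0, false, 1 => ((b10))
  | true, 0, false, 2 => ((b20))
  | true, 0, true, 0 => (- (be * t))
  | true, 0, true, 1 => (- (c2))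
  | true, 0, true, 2 => ((c1))
  | true, 1, false, 0 => ((b01))
  | true, 1, false, 1 => ((b11) + (al * t))
  | true, 1, false, 2 => ((b21))
  | true, 1, true, 0 => ((c2))
  | true, 1, true, 1 => (- (be * t))
  | true, 1, true, 2 => (- (c0))
  | true, 2, false, 0 => ((b02))
  | true, 2, false, 1 => ((b12))
  | true, 2, false, 2 => ((b22) + (al * t))
  | true, 2, true, 0 => (- (c1))
  | true, 2, true, 1 => ((c0))
  | true, 2, true, 2 => (- (be * t))
  | _, _, _, _ => 0 end.
Definition restab_so3 (lam al be t s0 s1 s2 c0 c1 c2 b00 b01 b02 b10 b11 b12 b20 b21 b22 : R) : seq R := [::
  (- (s2 ^+ 2) - (s1 ^+ 2) - (s0 ^+ 2) + (lam * b12 * b21) - (lam * b11 * b22) + (lam * b02 * b20) + (lam * b01 * b10) - (lam * b00 * b22) - (lam * b00 * b11) - (lam * al ^+ 2 * t ^+ 2) - (lam ^+ 2 * be ^+ 2 * t ^+ 2));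
  ((c2 * b10) - (c2 * b01) - (c1 * b20) + (c1 * b02) + (c0 * b21) - (c0 * b12) + (2%:R * al * be * t ^+ 2));
  (- (b12 * b21) + (b11 * b22) + (b02 ^+ 2) + (b01 ^+ 2) - (b00 * b22) - (b00 * b11) + (s2 * c2) + (s1 * c1) + (al ^+ 2 * t ^+ 2) + (lam * c0 ^+ 2) + (lam * be ^+ 2 * t ^+ 2));
  (- (b10 * b22) - (b10 * b11) + (b02 * b21) + (b02 * b12) - (b01 * b22) + (b01 * b11) - (s0 * c1) + (lam * c0 * c1));
  (- (b20 * b22) - (b11 * b20) + (b02 * b22) - (b02 * b11) + (b01 * b21) + (b01 * b12) - (s0 * c2) + (lam * c0 * c2));
  ((b12 * b20) - (b10 * b22) + (b02 * b12) - (b01 * b22) + (b00 * b10) - (b00 * b01) - (s1 * c0) + (lam * c0 * c1));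
  ((b12 ^+ 2) - (b11 * b22) + (b10 ^+ 2) - (b02 * b20) + (b00 * b22) - (b00 * b11) + (s2 * c2) + (s0 * c0) + (al ^+ 2 * t ^+ 2) + (lam * c1 ^+ 2) + (lam * be ^+ 2 * t ^+ 2));
  (- (b21 * b22) + (b12 * b22) + (b10 * b20) + (b02 * b10) - (b00 * b21) - (b00 * b12) - (s1 * c2) + (lam * c1 * c2));
  (- (b11 * b20) + (b10 * b21) - (b02 * b11) + (b01 * b21) + (b00 * b20) - (b00 * b02) - (s2 * c0) + (lam * c0 * c2));
  ((b11 * b21) - (b11 * b12) + (b10 * b20) + (b01 * b20) - (b00 * b21) - (b00 * b12) - (s2 * c1) + (lam * c1 * c2));
  ((b21 ^+ 2) + (b20 ^+ 2) - (b11 * b22) - (b01 * b10) - (b00 * b22) + (b00 * b11) + (s1 * c1) + (s0 * c0) + (al ^+ 2 * t ^+ 2) + (lam * c2 ^+ 2) + (lam * be ^+ 2 * t ^+ 2));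
  (- (s2 * b10) + (s1 * b20) - (s0 * b21) + (s0 * b12) - (lam * c2 * b10) + (lam * c1 * b20) - (2%:R * lam * al * be * t ^+ 2));
  ((s2 * b22) - (s2 * b11) + (s1 * b21) + (s1 * b12) + (s0 * b20) - (lam * c2 * b22) - (lam * c2 * b11) - (lam * c0 * b20));
  (- (s2 * b21) - (s2 * b12) + (s1 * b22) - (s1 * b11) - (s0 * b10) + (lam * c1 * b22) + (lam * c1 * b11) + (lam * c0 * b10));
  (- (s2 * b22) + (s2 * b00) - (s1 * b21) - (s0 * b20) - (s0 * b02) + (lam * c2 * b22) + (lam * c2 * b00) + (lam * c1 * b21));
  ((s2 * b01) + (s1 * b20) - (s1 * b02) - (s0 * b21) + (lam * c2 * b01) - (lam * c0 * b21) - (2%:R * lam * al * be * t ^+ 2));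
  ((s2 * b20) + (s2 * b02) + (s1 * b01) - (s0 * b22) + (s0 * b00) - (lam * c1 * b01) - (lam * c0 * b22) - (lam * c0 * b00));
  ((s2 * b12) + (s1 * b11) - (s1 * b00) + (s0 * b10) + (s0 * b01) - (lam * c2 * b12) - (lam * c1 * b11) - (lam * c1 * b00));
  (- (s2 * b02) - (s1 * b10) - (s1 * b01) + (s0 * b11) - (s0 * b00) + (lam * c2 * b02) + (lam * c0 * b11) + (lam * c0 * b00));
  (- (s2 * b10) + (s2 * b01) - (s1 * b02) + (s0 * b12) - (lam * c1 * b02) + (lam * c0 * b12) - (2%:R * lam * al * be * t ^+ 2))].
Definition tab_so3 : seq (seq (seq (nat * bool))) := [:: [:: [:: (20%N,false); (20%N,false); (20%N,false); (20%N,false); (20%N,false); (20%N,false)]; [:: (20%N,false); (20%N,false); (0%N,true); (17%N,false); (18%N,false); (19%N,false)]; [:: (20%N,false); (0%N,false); (20%N,false); (14%N,true); (15%N,true); (16%N,true)]; [:: (20%N,false); (17%N,true); (14%N,false); (20%N,false); (8%N,false); (5%N,true)]; [:: (20%N,false); (18%N,true); (15%N,false); (8%N,true); (20%N,false); (2%N,false)]; [:: (20%N,false); (19%N,true); (16%N,false); (5%N,false); (2%N,true); (20%N,false)]]; [:: [:: (20%N,false); (20%N,false); (0%N,false); (17%N,true); (18%N,true); (19%N,true)]; [:: (20%N,false); (20%N,false); (20%N,false); (20%N,false); (20%N,false); (20%N,false)]; [:: (0%N,true); (20%N,false); (20%N,false); (11%N,false); (12%N,false); (13%N,false)]; [:: (17%N,false);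 (20%N,false); (11%N,true); (20%N,false); (9%N,false); (6%N,true)]; [:: (18%N,false); (20%N,false); (12%N,true); (9%N,true); (20%N,false); (3%N,false)]; [:: (19%N,false); (20%N,false); (13%N,true); (6%N,false); (3%N,true); (20%N,false)]]; [:: [:: (20%N,false); (0%N,true); (20%N,false); (14%N,false); (15%N,false); (16%N,false)]; [:: (0%N,false); (20%N,false); (20%N,false); (11%N,true); (12%N,true); (13%N,true)]; [:: (20%N,false); (20%N,false); (20%N,false); (20%N,false); (20%N,false); (20%N,false)]; [:: (14%N,true); (11%N,false); (20%N,false); (20%N,false); (10%N,false); (7%N,true)]; [:: (15%N,true); (12%N,false); (20%N,false); (10%N,true); (20%N,false); (4%N,false)]; [:: (16%N,true); (13%N,false); (20%N,false); (7%N,false); (4%N,true); (20%N,false)]]; [:: [:: (20%N,false); (17%N,false); (14%N,true); (20%N,false); (8%N,true); (5%N,false)]; [:: (17%N,true); (20%N,false); (11%N,false); (20%N,false); (9%N,true); (6%N,false)]; [:: (14%N,false); (11%N,true); (20%N,false); (20%N,false); (10%N,true); (7%N,false)]; [:: (20%N,false); (20%N,false); (20%N,false); (20%N,false); (20%N,false); (20%N,false)]; [:: (8%N,false); (9%N,false); (10%N,false); (20%N,false); (20%N,false); (1%N,true)]; [:: (5%N,true); (6%N,true); (7%N,true); (20%N,false); (1%N,false); (20%N,false)]]; [:: [:: (20%N,false); (18%N,false); (15%N,true); (8%N,false); (20%N,false); (2%N,true)]; [:: (18%N,true); (20%N,false); (12%N,false); (9%N,false); (20%N,false); (3%N,true)];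 [:: (15%N,false); (12%N,true); (20%N,false); (10%N,false); (20%N,false); (4%N,true)]; [:: (8%N,true); (9%N,true); (10%N,true); (20%N,false); (20%N,false); (1%N,false)]; [:: (20%N,false); (20%N,false); (20%N,false); (20%N,false); (20%N,false); (20%N,false)]; [:: (2%N,false); (3%N,false); (4%N,false); (1%N,true); (20%N,false); (20%N,false)]]; [:: [:: (20%N,false); (19%N,false); (16%N,true); (5%N,true); (2%N,false); (20%N,false)]; [:: (19%N,true); (20%N,false); (13%N,false); (6%N,true); (3%N,false); (20%N,false)]; [:: (16%N,false); (13%N,true); (20%N,false); (7%N,true); (4%N,false); (20%N,false)]; [:: (5%N,false); (6%N,false); (7%N,false); (20%N,false); (1%N,true); (20%N,false)]; [:: (2%N,true); (3%N,true); (4%N,true); (1%N,false); (20%N,false); (20%N,false)]; [:: (20%N,false); (20%N,false); (20%N,false); (20%N,false); (20%N,false); (20%N,false)]]].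
Definition rtab_so21 (lam al be t s0 s1 s2 c0 c1 c2 b00 b01 b02 b10 b11 b12 b20 b21 b22 : R) (u v : bidx) : R :=
  match u.1, nat_of_ord u.2, v.1, nat_of_ord v.2 with
  | false, 0, false, 0 => (- (lam * be * t))
  | false, 0, false, 1 => ((s2))
  | false, 0, false, 2 => (- (s1))
  | false, 0, true, 0 => (- (b00) + (al * t))
  | false, 0, true, 1 => ((b01))
  | false, 0, true, 2 => ((b02))
  | false, 1, false, 0 => (- (s2))
  | false, 1, false, 1 => ((lam * be * t))
  | false, 1, false, 2 => (- (s0))
  | false, 1, true, 0 => (- (b10))
  | false, 1, true, 1 => ((b11) - (al * t))
  | false, 1, true, 2 => ((b12))
  | false, 2, false, 0 => ((s1))
  | false, 2, false, 1 => ((s0))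
  | false, 2, false, 2 => ((lam * be * t))
  | false, 2, true, 0 => (- (b20))
  | false, 2, true, 1 => ((b21))
  | false, 2, true, 2 => ((b22) - (al * t))
  | true, 0, false, 0 => ((b00) + (al * t))
  | true, 0, false, 1 => ((b10))
  | true, 0, false, 2 => ((b20))
  | true, 0, true, 0 => (- (be * t))
  | true, 0, true, 1 => ((c2))
  | true, 0, true, 2 => (- (c1))
  | true, 1, false, 0 => (- (b01))
  | true, 1, false, 1 => (- (b11) - (al * t))
  | true, 1, false, 2 => (- (b21))
  | true, 1, true, 0 => (- (c2))
  | true, 1, true, 1 => ((be * t))
  | true, 1, true, 2 => (- (c0))
  | true, 2, false, 0 => (- (b02))
  | true, 2, false, 1 => (- (b12))
  | true, 2, false, 2 => (- (b22) - (al * t))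
  | true, 2, true, 0 => ((c1))
  | true, 2, true, 1 => ((c0))
  | true, 2, true, 2 => ((be * t))
  | _, _, _, _ => 0 end.
Definition restab_so21 (lam al be t s0 s1 s2 c0 c1 c2 b00 b01 b02 b10 b11 b12 b20 b21 b22 : R) : seq R := [::
  ((s2 ^+ 2) + (s1 ^+ 2) - (s0 ^+ 2) + (lam * b12 * b21) - (lam * b11 * b22) + (lam * b02 * b20) + (lam * b01 * b10) - (lam * b00 * b22) - (lam * b00 * b11) - (lam * al ^+ 2 * t ^+ 2) - (lam ^+ 2 * be ^+ 2 * t ^+ 2));
  ((c2 * b10) + (c2 * b01) - (c1 * b20) - (c1 * b02) - (c0 * b21) + (c0 * b12) + (2%:R * al * be * t ^+ 2));
  (- (b12 * b21) + (b11 * b22) - (b02 ^+ 2) - (b01 ^+ 2) - (b00 * b22) - (b00 * b11) - (s2 * c2) - (s1 * c1) + (al ^+ 2 * t ^+ 2) + (lam * c0 ^+ 2) + (lam * be ^+ 2 * t ^+ 2));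
  ((b10 * b22) + (b10 * b11) + (b02 * b21) + (b02 * b12) - (b01 * b22) + (b01 * b11) + (s0 * c1) - (lam * c0 * c1));
  ((b20 * b22) + (b11 * b20) + (b02 * b22) - (b02 * b11) + (b01 * b21) + (b01 * b12) + (s0 * c2) - (lam * c0 * c2));
  ((b12 * b20) - (b10 * b22) - (b02 * b12) + (b01 * b22) + (b00 * b10) + (b00 * b01) - (s1 * c0) + (lam * c0 * c1));
  ((b12 ^+ 2) - (b11 * b22) - (b10 ^+ 2) - (b02 * b20) + (b00 * b22) - (b00 * b11) - (s2 * c2) + (s0 * c0) + (al ^+ 2 * t ^+ 2) - (lam * c1 ^+ 2) + (lam * be ^+ 2 * t ^+ 2));
  (- (b21 * b22) + (b12 * b22) - (b10 * b20) + (b02 * b10) - (b00 * b21) - (b00 * b12) + (s1 * c2) - (lam * c1 * c2));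
  (- (b11 * b20) + (b10 * b21) + (b02 * b11) - (b01 * b21) + (b00 * b20) + (b00 * b02) - (s2 * c0) + (lam * c0 * c2));
  ((b11 * b21) - (b11 * b12) - (b10 * b20) + (b01 * b20) - (b00 * b21) - (b00 * b12) + (s2 * c1) - (lam * c1 * c2));
  ((b21 ^+ 2) - (b20 ^+ 2) - (b11 * b22) - (b01 * b10) - (b00 * b22) + (b00 * b11) - (s1 * c1) + (s0 * c0) + (al ^+ 2 * t ^+ 2) - (lam * c2 ^+ 2) + (lam * be ^+ 2 * t ^+ 2));
  (- (s2 * b10) + (s1 * b20) + (s0 * b21) - (s0 * b12) - (lam * c2 * b10) + (lam * c1 * b20) - (2%:R * lam * al * be * t ^+ 2));
  ((s2 * b22) - (s2 * b11) + (s1 * b21) + (s1 * b12) + (s0 * b20) - (lam * c2 * b22) - (lam * c2 * b11) - (lam * c0 * b20));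
  (- (s2 * b21) - (s2 * b12) + (s1 * b22) - (s1 * b11) - (s0 * b10) + (lam * c1 * b22) + (lam * c1 * b11) + (lam * c0 * b10));
  ((s2 * b22) - (s2 * b00) + (s1 * b21) + (s0 * b20) - (s0 * b02) - (lam * c2 * b22) - (lam * c2 * b00) - (lam * c1 * b21));
  (- (s2 * b01) + (s1 * b20) + (s1 * b02) + (s0 * b21) - (lam * c2 * b01) + (lam * c0 * b21) - (2%:R * lam * al * be * t ^+ 2));
  ((s2 * b20) - (s2 * b02) - (s1 * b01) + (s0 * b22) - (s0 * b00) + (lam * c1 * b01) + (lam * c0 * b22) + (lam * c0 * b00));
  (- (s2 * b12) - (s1 * b11) + (s1 * b00) - (s0 * b10) + (s0 * b01) + (lam * c2 * b12) + (lam * c1 * b11) + (lam * c1 * b00));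
  ((s2 * b02) - (s1 * b10) + (s1 * b01) - (s0 * b11) + (s0 * b00) - (lam * c2 * b02) - (lam * c0 * b11) - (lam * c0 * b00));
  (- (s2 * b10) - (s2 * b01) + (s1 * b02) - (s0 * b12) + (lam * c1 * b02) - (lam * c0 * b12) - (2%:R * lam * al * be * t ^+ 2))].
Definition tab_so21 : seq (seq (seq (nat * bool))) := [:: [:: [:: (20%N,false); (20%N,false); (20%N,false); (20%N,false); (20%N,false); (20%N,false)]; [:: (20%N,false); (20%N,false); (0%N,true); (17%N,true); (18%N,false); (19%N,false)]; [:: (20%N,false); (0%N,false); (20%N,false); (14%N,false); (15%N,true); (16%N,true)]; [:: (20%N,false); (17%N,false); (14%N,true); (20%N,false); (8%N,true); (5%N,false)]; [:: (20%N,false); (18%N,true); (15%N,false); (8%N,false); (20%N,false); (2%N,false)]; [:: (20%N,false); (19%N,true); (16%N,false); (5%N,true); (2%N,true); (20%N,false)]]; [:: [:: (20%N,false); (20%N,false); (0%N,false); (17%N,false); (18%N,true); (19%N,true)]; [:: (20%N,false); (20%N,false); (20%N,false); (20%N,false); (20%N,false); (20%N,false)]; [:: (0%N,true); (20%N,false); (20%N,false); (11%N,false); (12%N,true); (13%N,true)]; [:: (17%N,true); (20%N,false); (11%N,true); (20%N,false); (9%N,false); (6%N,true)]; [:: (18%N,false); (20%N,false); (12%N,false); (9%N,true); (20%N,false); (3%N,true)]; [:: (19%N,false); (20%N,false); (13%N,false); (6%N,false); (3%N,false); (20%N,false)]]; [:: [:: (20%N,false); (0%N,true); (20%N,false); (14%N,true);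 (15%N,false); (16%N,false)]; [:: (0%N,false); (20%N,false); (20%N,false); (11%N,true); (12%N,false); (13%N,false)]; [:: (20%N,false); (20%N,false); (20%N,false); (20%N,false); (20%N,false); (20%N,false)]; [:: (14%N,false); (11%N,false); (20%N,false); (20%N,false); (10%N,false); (7%N,true)]; [:: (15%N,true); (12%N,true); (20%N,false); (10%N,true); (20%N,false); (4%N,true)]; [:: (16%N,true); (13%N,true); (20%N,false); (7%N,false); (4%N,false); (20%N,false)]]; [:: [:: (20%N,false); (17%N,true); (14%N,false); (20%N,false); (8%N,false); (5%N,true)]; [:: (17%N,false); (20%N,false); (11%N,false); (20%N,false); (9%N,true); (6%N,false)]; [:: (14%N,true); (11%N,true); (20%N,false); (20%N,false); (10%N,true); (7%N,false)]; [:: (20%N,false); (20%N,false); (20%N,false); (20%N,false); (20%N,false); (20%N,false)]; [:: (8%N,true); (9%N,false); (10%N,false); (20%N,false); (20%N,false); (1%N,true)]; [:: (5%N,false); (6%N,true); (7%N,true); (20%N,false); (1%N,false); (20%N,false)]]; [:: [:: (20%N,false); (18%N,false); (15%N,true); (8%N,true); (20%N,false); (2%N,true)]; [:: (18%N,true); (20%N,false); (12%N,true); (9%N,false); (20%N,false); (3%N,false)]; [:: (15%N,false); (12%N,false); (20%N,false); (10%N,false); (20%N,false); (4%N,false)]; [:: (8%N,false); (9%N,true); (10%N,true); (20%N,false); (20%N,false); (1%N,false)]; [:: (20%N,false); (20%N,false); (20%N,false); (20%N,false); (20%N,false); (20%N,false)]; [:: (2%N,false); (3%N,true); (4%N,true);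 (1%N,true); (20%N,false); (20%N,false)]]; [:: [:: (20%N,false); (19%N,false); (16%N,true); (5%N,false); (2%N,false); (20%N,false)]; [:: (19%N,true); (20%N,false); (13%N,true); (6%N,true); (3%N,true); (20%N,false)]; [:: (16%N,false); (13%N,false); (20%N,false); (7%N,true); (4%N,true); (20%N,false)]; [:: (5%N,true); (6%N,false); (7%N,false); (20%N,false); (1%N,true); (20%N,false)]; [:: (2%N,true); (3%N,false); (4%N,false); (1%N,false); (20%N,false); (20%N,false)]; [:: (20%N,false); (20%N,false); (20%N,false); (20%N,false); (20%N,false); (20%N,false)]]].
End Tabs.

Definition bcode (x : bidx) : nat :=
  match x.1, nat_of_ord x.2 with
  | false, 0 => 0 | false, 1 => 1 | false, _ => 2 | true, 0 => 3 | true, 1 => 4 | true, _ => 5 end.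
Definition tlook (tab : seq (seq (seq (nat * bool)))) (x y z : bidx) : nat * bool :=
  nth (20%N,false) (nth [::] (nth [::] tab (bcode x)) (bcode y)) (bcode z).
Lemma etaU_so21 (R : realFieldType) : (etaU R so21 o0 = 1) * (etaU R so21 o1 = -1) * (etaU R so21 o2 = -1).
Proof. by rewrite /etaU /Defs.eta /= ?invr1 ?invrN1. Qed.
Lemma etaU_so3 (R : realFieldType) : (etaU R so3 o0 = 1) * (etaU R so3 o1 = 1) * (etaU R so3 o2 = 1).
Proof. by rewrite /etaU /Defs.eta /= ?invr1 ?invrN1. Qed.

Section MK3.
Variable R : realFieldType.
Implicit Types x y : R.
Lemma mk3P (M : 'M[R]_3) : M = mk3 (M o0 o0) (M o0 o1) (M o0 o2) (M o1 o0) (M o1 o1) (M o1 o2) (M o2 o0) (M o2 o1) (M o2 o2).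
Proof. apply/matrixP => i j; rewrite !mxE; by case: (ord3_cases i) => [|[]] ->; case: (ord3_cases j) => [|[]] ->. Qed.
Lemma mk3_add x00 x01 x02 x10 x11 x12 x20 x21 x22 y00 y01 y02 y10 y11 y12 y20 y21 y22 :
  mk3 x00 x01 x02 x10 x11 x12 x20 x21 x22 + mk3 y00 y01 y02 y10 y11 y12 y20 y21 y22 =
  mk3 (x00+y00) (x01+y01) (x02+y02) (x10+y10) (x11+y11) (x12+y12) (x20+y20) (x21+y21) (x22+y22).
Proof. apply/matrixP => i j; rewrite !mxE; by case: (ord3_cases i) => [|[]] ->; case: (ord3_cases j) => [|[]] ->. Qed.
Lemma mk3_opp x00 x01 x02 x10 x11 x12 x20 x21 x22 :
  - mk3 x00 x01 x02 x10 x11 x12 x20 x21 x22 = mk3 (-x00) (-x01) (-x02) (-x10) (-x11) (-x12) (-x20) (-x21) (-x22).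
Proof. apply/matrixP => i j; rewrite !mxE; by case: (ord3_cases i) => [|[]] ->; case: (ord3_cases j) => [|[]] ->. Qed.
Lemma mk3_scale a x00 x01 x02 x10 x11 x12 x20 x21 x22 :
  a *: mk3 x00 x01 x02 x10 x11 x12 x20 x21 x22 = mk3 (a*x00) (a*x01) (a*x02) (a*x10) (a*x11) (a*x12) (a*x20) (a*x21) (a*x22).
Proof. apply/matrixP => i j; rewrite !mxE; by case: (ord3_cases i) => [|[]] ->; case: (ord3_cases j) => [|[]] ->. Qed.
Lemma mk3_scalar a : (a%:M : 'M[R]_3) = mk3 a 0 0 0 a 0 0 0 a.
Proof. apply/matrixP => i j; rewrite !mxE; by case: (ord3_cases i) => [|[]] ->; case: (ord3_cases j) => [|[]] ->. Qed.
Lemma mk3_tr x00 x01 x02 x10 x11 x12 x20 x21 x22 :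
  \tr (mk3 x00 x01 x02 x10 x11 x12 x20 x21 x22) = x00 + x11 + x22.
Proof. by rewrite /mxtrace sum3 !mxE. Qed.
Lemma mk3_trmx x00 x01 x02 x10 x11 x12 x20 x21 x22 :
  (mk3 x00 x01 x02 x10 x11 x12 x20 x21 x22)^T = mk3 x00 x10 x20 x01 x11 x21 x02 x12 x22.
Proof. apply/matrixP => i j; rewrite !mxE; by case: (ord3_cases i) => [|[]] ->; case: (ord3_cases j) => [|[]] ->. Qed.
Lemma mk3_mul x00 x01 x02 x10 x11 x12 x20 x21 x22 y00 y01 y02 y10 y11 y12 y20 y21 y22 :
  mk3 x00 x01 x02 x10 x11 x12 x20 x21 x22 *m mk3 y00 y01 y02 y10 y11 y12 y20 y21 y22 =
  mk3 (x00*y00+x01*y10+x02*y20) (x00*y01+x01*y11+x02*y21) (x00*y02+x01*y12+x02*y22)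
      (x10*y00+x11*y10+x12*y20) (x10*y01+x11*y11+x12*y21) (x10*y02+x11*y12+x12*y22)
      (x20*y00+x21*y10+x22*y20) (x20*y01+x21*y11+x22*y21) (x20*y02+x21*y12+x22*y22).
Proof. apply/matrixP => i j; rewrite !mxE sum3 !mxE; by case: (ord3_cases i) => [|[]] ->; case: (ord3_cases j) => [|[]] ->. Qed.
Lemma mk3_inj x00 x01 x02 x10 x11 x12 x20 x21 x22 y00 y01 y02 y10 y11 y12 y20 y21 y22 :
  mk3 x00 x01 x02 x10 x11 x12 x20 x21 x22 = mk3 y00 y01 y02 y10 y11 y12 y20 y21 y22 ->
  [/\ [/\ x00 = y00, x01 = y01 & x02 = y02], [/\ x10 = y10, x11 = y11 & x12 = y12] & [/\ x20 = y20, x21 = y21 & x22 = y22]].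
Proof.
move=> E; have F i j : (mk3 x00 x01 x02 x10 x11 x12 x20 x21 x22) i j = (mk3 y00 y01 y02 y10 y11 y12 y20 y21 y22) i j by rewrite E.
by move: (F o0 o0) (F o0 o1) (F o0 o2) (F o1 o0) (F o1 o1) (F o1 o2) (F o2 o0) (F o2 o1) (F o2 o2); rewrite !mxE /=.
Qed.
Lemma etaM_mk3 g : etaM R g = mk3 (Defs.eta R g o0) 0 0 0 (Defs.eta R g o1) 0 0 0 (Defs.eta R g o2).
Proof. apply/matrixP => i j; rewrite !mxE; by case: (ord3_cases i) => [|[]] ->; case: (ord3_cases j) => [|[]] ->. Qed.
End MK3.

Lemma eta_so21 (R : realFieldType) : (Defs.eta R so21 o0 = 1) * (Defs.eta R so21 o1 = -1) * (Defs.eta R so21 o2 = -1).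
Proof. by []. Qed.
Lemma eta_so3 (R : realFieldType) : (Defs.eta R so3 o0 = 1) * (Defs.eta R so3 o1 = 1) * (Defs.eta R so3 o2 = 1).
Proof. by []. Qed.
Lemma invmx_etaM (R : realFieldType) g : invmx (etaM R g) = etaM R g.
Proof.
have EE : etaM R g *m etaM R g = 1%:M.
  apply/matrixP => i j; rewrite !mxE sum3 !mxE.
  by case: g; case: (ord3_cases i) => [|[]] ->; case: (ord3_cases j) => [|[]] ->; rewrite /= ?mxE /=; ring.
have [U _] := mulmx1_unit EE.
by rewrite -[LHS]mulmx1 -EE mulmxA mulVmx // mul1mx.
Qed.
Lemma use_eq (R : realFieldType) (x L Rr : R) : L = Rr -> x = L - Rr -> x = 0.
Proof. by move=> -> ->; rewrite subrr. Qed.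

Lemma rtab_eq_so3 (R : realFieldType) (lam al be t s0 s1 s2 c0 c1 c2 b00 b01 b02 b10 b11 b12 b20 b21 b22 : R) (u v : bidx) :
  rprime so3 (Amat so3 s0 s1 s2) (mk3 b00 b01 b02 b10 b11 b12 b20 b21 b22) (Amat so3 c0 c1 c2) u v
  + Kt so3 lam al be t u v = rtab_so3 lam al be t s0 s1 s2 c0 c1 c2 b00 b01 b02 b10 b11 b12 b20 b21 b22 u v.
Proof.
case: (bidx_cases u) => [|[|[|[|[|]]]]] ->; case: (bidx_cases v) => [|[|[|[|[|]]]]] ->;
  rewrite /rtab_so3 /rprime /Kt /ment /Amat /mk3 !mxE !sum3 !mxE /= ?eta_so3 ?etaU_so3; ring.
Qed.
Lemma rtab_eq_so21 (R : realFieldType) (lam al be t s0 s1 s2 c0 c1 c2 b00 b01 b02 b10 b11 b12 b20 b21 b22 : R) (u v : bidx) :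
  rprime so21 (Amat so21 s0 s1 s2) (mk3 b00 b01 b02 b10 b11 b12 b20 b21 b22) (Amat so21 c0 c1 c2) u v
  + Kt so21 lam al be t u v = rtab_so21 lam al be t s0 s1 s2 c0 c1 c2 b00 b01 b02 b10 b11 b12 b20 b21 b22 u v.
Proof.
case: (bidx_cases u) => [|[|[|[|[|]]]]] ->; case: (bidx_cases v) => [|[|[|[|[|]]]]] ->;
  rewrite /rtab_so21 /rprime /Kt /ment /Amat /mk3 !mxE !sum3 !mxE /= ?eta_so21 ?etaU_so21; ring.
Qed.
Lemma restab0_so3 (R : realFieldType) (lam al be t s0 s1 s2 c0 c1 c2 b00 b01 b02 b10 b11 b12 b20 b21 b22 : R)
  (e1 : \tr ((Amat so3 s0 s1 s2) *m (Amat so3 s0 s1 s2)) / 2 - lam / 2 * (\tr (mk3 b00 b01 b02 b10 b11 b12 b20 b21 b22) ^+ 2 - \tr ((mk3 b00 b01 b02 b10 b11 b12 b20 b21 b22) *m (mk3 b00 b01 b02 b10 b11 b12 b20 b21 b22))) = ((al ^+ 2 + lam * be ^+ 2) * t ^+ 2) * lam)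
  (e2 : \tr ((Amat so3 c0 c1 c2) *m (mk3 b00 b01 b02 b10 b11 b12 b20 b21 b22)) = (- (2 * al * be) * t ^+ 2))
  (e3 : ((mk3 b00 b01 b02 b10 b11 b12 b20 b21 b22) - (\tr (mk3 b00 b01 b02 b10 b11 b12 b20 b21 b22))%:M) *m ((mk3 b00 b01 b02 b10 b11 b12 b20 b21 b22) + gtr so3 (mk3 b00 b01 b02 b10 b11 b12 b20 b21 b22))
        + ((\tr (mk3 b00 b01 b02 b10 b11 b12 b20 b21 b22) ^+ 2 - \tr ((mk3 b00 b01 b02 b10 b11 b12 b20 b21 b22) *m (mk3 b00 b01 b02 b10 b11 b12 b20 b21 b22))) / 2)%:M - (Amat so3 c0 c1 c2) *m (Amat so3 s0 s1 s2)
        + lam *: ((Amat so3 c0 c1 c2) *m (Amat so3 c0 c1 c2) - (\tr ((Amat so3 c0 c1 c2) *m (Amat so3 c0 c1 c2)) / 2)%:M)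
        = - (((al ^+ 2 + lam * be ^+ 2) * t ^+ 2))%:M)
  (e4 : - ((Amat so3 s0 s1 s2) *m ((mk3 b00 b01 b02 b10 b11 b12 b20 b21 b22) + gtr so3 (mk3 b00 b01 b02 b10 b11 b12 b20 b21 b22))) + (gtr so3 (mk3 b00 b01 b02 b10 b11 b12 b20 b21 b22) - (\tr (mk3 b00 b01 b02 b10 b11 b12 b20 b21 b22))%:M) *m (lam *: (Amat so3 c0 c1 c2) - (Amat so3 s0 s1 s2))
        - (\tr ((Amat so3 s0 s1 s2) *m (mk3 b00 b01 b02 b10 b11 b12 b20 b21 b22)))%:M
        = - (lam * (- (2 * al * be) * t ^+ 2))%:M) :
  forall k, nth 0 (restab_so3 lam al be t s0 s1 s2 c0 c1 c2 b00 b01 b02 b10 b11 b12 b20 b21 b22) k = 0.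
Proof.
rewrite /gtr ?invmx_etaM ?etaM_mk3 /Amat ?eta_so3 in e1 e2 e3 e4.
rewrite !(mk3_mul, mk3_add, mk3_opp, mk3_scale, mk3_scalar, mk3_tr, mk3_trmx) in e1 e2 e3 e4.
move: e1 e2 => h0 h1.
case/mk3_inj: e3 => [[h2 h3 h4] [h5 h6 h7] [h8 h9 h10]].
case/mk3_inj: e4 => [[h11 h12 h13] [h14 h15 h16] [h17 h18 h19]].
case=> [|k]; first by apply: (use_eq h0); rewrite /=; field.
case: k => [|k]; first by apply: (use_eq h1); rewrite /=; field.
case: k => [|k]; first by apply: (use_eq h2); rewrite /=; field.
case: k => [|k]; first by apply: (use_eq h3); rewrite /=; field.
case: k => [|k]; first by apply: (use_eq h4); rewrite /=; field.
case: k => [|k]; first by apply: (use_eq h5); rewrite /=; field.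
case: k => [|k]; first by apply: (use_eq h6); rewrite /=; field.
case: k => [|k]; first by apply: (use_eq h7); rewrite /=; field.
case: k => [|k]; first by apply: (use_eq h8); rewrite /=; field.
case: k => [|k]; first by apply: (use_eq h9); rewrite /=; field.
case: k => [|k]; first by apply: (use_eq h10); rewrite /=; field.
case: k => [|k]; first by apply: (use_eq h11); rewrite /=; field.
case: k => [|k]; first by apply: (use_eq h12); rewrite /=; field.
case: k => [|k]; first by apply: (use_eq h13); rewrite /=; field.
case: k => [|k]; first by apply: (use_eq h14); rewrite /=; field.
case: k => [|k]; first by apply: (use_eq h15); rewrite /=; field.
case: k => [|k]; first by apply: (use_eq h16); rewrite /=; field.
case: k => [|k]; first by apply: (use_eq h17); rewrite /=; field.
case: k => [|k]; first by apply: (use_eq h18); rewrite /=; field.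
case: k => [|k]; first by apply: (use_eq h19); rewrite /=; field.
by rewrite nth_default.
Qed.

Lemma restab0_so21 (R : realFieldType) (lam al be t s0 s1 s2 c0 c1 c2 b00 b01 b02 b10 b11 b12 b20 b21 b22 : R)
  (e1 : \tr ((Amat so21 s0 s1 s2) *m (Amat so21 s0 s1 s2)) / 2 - lam / 2 * (\tr (mk3 b00 b01 b02 b10 b11 b12 b20 b21 b22) ^+ 2 - \tr ((mk3 b00 b01 b02 b10 b11 b12 b20 b21 b22) *m (mk3 b00 b01 b02 b10 b11 b12 b20 b21 b22))) = ((al ^+ 2 + lam * be ^+ 2) * t ^+ 2) * lam)
  (e2 : \tr ((Amat so21 c0 c1 c2) *m (mk3 b00 b01 b02 b10 b11 b12 b20 b21 b22)) = (- (2 * al * be) * t ^+ 2))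
  (e3 : ((mk3 b00 b01 b02 b10 b11 b12 b20 b21 b22) - (\tr (mk3 b00 b01 b02 b10 b11 b12 b20 b21 b22))%:M) *m ((mk3 b00 b01 b02 b10 b11 b12 b20 b21 b22) + gtr so21 (mk3 b00 b01 b02 b10 b11 b12 b20 b21 b22))
        + ((\tr (mk3 b00 b01 b02 b10 b11 b12 b20 b21 b22) ^+ 2 - \tr ((mk3 b00 b01 b02 b10 b11 b12 b20 b21 b22) *m (mk3 b00 b01 b02 b10 b11 b12 b20 b21 b22))) / 2)%:M - (Amat so21 c0 c1 c2) *m (Amat so21 s0 s1 s2)
        + lam *: ((Amat so21 c0 c1 c2) *m (Amat so21 c0 c1 c2) - (\tr ((Amat so21 c0 c1 c2) *m (Amat so21 c0 c1 c2)) / 2)%:M)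
        = - (((al ^+ 2 + lam * be ^+ 2) * t ^+ 2))%:M)
  (e4 : - ((Amat so21 s0 s1 s2) *m ((mk3 b00 b01 b02 b10 b11 b12 b20 b21 b22) + gtr so21 (mk3 b00 b01 b02 b10 b11 b12 b20 b21 b22))) + (gtr so21 (mk3 b00 b01 b02 b10 b11 b12 b20 b21 b22) - (\tr (mk3 b00 b01 b02 b10 b11 b12 b20 b21 b22))%:M) *m (lam *: (Amat so21 c0 c1 c2) - (Amat so21 s0 s1 s2))
        - (\tr ((Amat so21 s0 s1 s2) *m (mk3 b00 b01 b02 b10 b11 b12 b20 b21 b22)))%:M
        = - (lam * (- (2 * al * be) * t ^+ 2))%:M) :
  forall k, nth 0 (restab_so21 lam al be t s0 s1 s2 c0 c1 c2 b00 b01 b02 b10 b11 b12 b20 b21 b22) k = 0.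
Proof.
rewrite /gtr ?invmx_etaM ?etaM_mk3 /Amat ?eta_so21 in e1 e2 e3 e4.
rewrite !(mk3_mul, mk3_add, mk3_opp, mk3_scale, mk3_scalar, mk3_tr, mk3_trmx) in e1 e2 e3 e4.
move: e1 e2 => h0 h1.
case/mk3_inj: e3 => [[h2 h3 h4] [h5 h6 h7] [h8 h9 h10]].
case/mk3_inj: e4 => [[h11 h12 h13] [h14 h15 h16] [h17 h18 h19]].
case=> [|k]; first by apply: (use_eq h0); rewrite /=; field.
case: k => [|k]; first by apply: (use_eq h1); rewrite /=; field.
case: k => [|k]; first by apply: (use_eq h2); rewrite /=; field.
case: k => [|k]; first by apply: (use_eq h3); rewrite /=; field.
case: k => [|k]; first by apply: (use_eq h4); rewrite /=; field.
case: k => [|k]; first by apply: (use_eq h5); rewrite /=; field.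
case: k => [|k]; first by apply: (use_eq h6); rewrite /=; field.
case: k => [|k]; first by apply: (use_eq h7); rewrite /=; field.
case: k => [|k]; first by apply: (use_eq h8); rewrite /=; field.
case: k => [|k]; first by apply: (use_eq h9); rewrite /=; field.
case: k => [|k]; first by apply: (use_eq h10); rewrite /=; field.
case: k => [|k]; first by apply: (use_eq h11); rewrite /=; field.
case: k => [|k]; first by apply: (use_eq h12); rewrite /=; field.
case: k => [|k]; first by apply: (use_eq h13); rewrite /=; field.
case: k => [|k]; first by apply: (use_eq h14); rewrite /=; field.
case: k => [|k]; first by apply: (use_eq h15); rewrite /=; field.
case: k => [|k]; first by apply: (use_eq h16); rewrite /=; field.
case: k => [|k]; first by apply: (use_eq h17); rewrite /=; field.
case: k => [|k]; first by apply: (use_eq h18); rewrite /=; field.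
case: k => [|k]; first by apply: (use_eq h19); rewrite /=; field.
by rewrite nth_default.
Qed.
Lemma key_so3 (R : realFieldType) (lam al be t s0 s1 s2 c0 c1 c2 b00 b01 b02 b10 b11 b12 b20 b21 b22 : R) (x y z : bidx) :
  cybe so3 lam (rtab_so3 lam al be t s0 s1 s2 c0 c1 c2 b00 b01 b02 b10 b11 b12 b20 b21 b22) x y z =
  (if (tlook tab_so3 x y z).2 then -1 else 1) *
  nth 0 (restab_so3 lam al be t s0 s1 s2 c0 c1 c2 b00 b01 b02 b10 b11 b12 b20 b21 b22) (tlook tab_so3 x y z).1.
Proof.
rewrite /cybe !sumb.
case: (bidx_cases x) => [|[|[|[|[|]]]]] ->; case: (bidx_cases y) => [|[|[|[|[|]]]]] ->;
  case: (bidx_cases z) => [|[|[|[|[|]]]]] ->;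
  cbv beta iota delta [sconst eps rtab_so3 bcode tlook tab_so3 restab_so3 nth fst snd nat_of_ord o0 o1 o2];
  rewrite !etaU_so3; ring.
Qed.
Lemma key_so21 (R : realFieldType) (lam al be t s0 s1 s2 c0 c1 c2 b00 b01 b02 b10 b11 b12 b20 b21 b22 : R) (x y z : bidx) :
  cybe so21 lam (rtab_so21 lam al be t s0 s1 s2 c0 c1 c2 b00 b01 b02 b10 b11 b12 b20 b21 b22) x y z =
  (if (tlook tab_so21 x y z).2 then -1 else 1) *
  nth 0 (restab_so21 lam al be t s0 s1 s2 c0 c1 c2 b00 b01 b02 b10 b11 b12 b20 b21 b22) (tlook tab_so21 x y z).1.
Proof.
rewrite /cybe !sumb.
case: (bidx_cases x) => [|[|[|[|[|]]]]] ->; case: (bidx_cases y) => [|[|[|[|[|]]]]] ->;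
  case: (bidx_cases z) => [|[|[|[|[|]]]]] ->;
  cbv beta iota delta [sconst eps rtab_so21 bcode tlook tab_so21 restab_so21 nth fst snd nat_of_ord o0 o1 o2];
  rewrite !etaU_so21; ring.
Qed.
Lemma cybe_ext (R : realFieldType) g (lam : R) (r r' : bidx -> bidx -> R) (x y z : bidx) :
  (forall u v, r u v = r' u v) -> cybe g lam r x y z = cybe g lam r' x y z.
Proof.
move=> E; rewrite /cybe; congr (_ + _ + _); apply: eq_bigr => u _; apply: eq_bigr => v _; by rewrite !E.
Qed.
Lemma core_so3 (R : realFieldType) (lam al be t s0 s1 s2 c0 c1 c2 b00 b01 b02 b10 b11 b12 b20 b21 b22 : R)
  (e1 : \tr ((Amat so3 s0 s1 s2) *m (Amat so3 s0 s1 s2)) / 2 - lam / 2 * (\tr (mk3 b00 b01 b02 b10 b11 b12 b20 b21 b22) ^+ 2 - \tr ((mk3 b00 b01 b02 b10 b11 b12 b20 b21 b22) *m (mk3 b00 b01 b02 b10 b11 b12 b20 b21 b22))) = ((al ^+ 2 + lam * be ^+ 2) * t ^+ 2) * lam)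
  (e2 : \tr ((Amat so3 c0 c1 c2) *m (mk3 b00 b01 b02 b10 b11 b12 b20 b21 b22)) = (- (2 * al * be) * t ^+ 2))
  (e3 : ((mk3 b00 b01 b02 b10 b11 b12 b20 b21 b22) - (\tr (mk3 b00 b01 b02 b10 b11 b12 b20 b21 b22))%:M) *m ((mk3 b00 b01 b02 b10 b11 b12 b20 b21 b22) + gtr so3 (mk3 b00 b01 b02 b10 b11 b12 b20 b21 b22))
        + ((\tr (mk3 b00 b01 b02 b10 b11 b12 b20 b21 b22) ^+ 2 - \tr ((mk3 b00 b01 b02 b10 b11 b12 b20 b21 b22) *m (mk3 b00 b01 b02 b10 b11 b12 b20 b21 b22))) / 2)%:M - (Amat so3 c0 c1 c2) *m (Amat so3 s0 s1 s2)
        + lam *: ((Amat so3 c0 c1 c2) *m (Amat so3 c0 c1 c2) - (\tr ((Amat so3 c0 c1 c2) *m (Amat so3 c0 c1 c2)) / 2)%:M)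
        = - (((al ^+ 2 + lam * be ^+ 2) * t ^+ 2))%:M)
  (e4 : - ((Amat so3 s0 s1 s2) *m ((mk3 b00 b01 b02 b10 b11 b12 b20 b21 b22) + gtr so3 (mk3 b00 b01 b02 b10 b11 b12 b20 b21 b22))) + (gtr so3 (mk3 b00 b01 b02 b10 b11 b12 b20 b21 b22) - (\tr (mk3 b00 b01 b02 b10 b11 b12 b20 b21 b22))%:M) *m (lam *: (Amat so3 c0 c1 c2) - (Amat so3 s0 s1 s2))
        - (\tr ((Amat so3 s0 s1 s2) *m (mk3 b00 b01 b02 b10 b11 b12 b20 b21 b22)))%:M
        = - (lam * (- (2 * al * be) * t ^+ 2))%:M) (x y z : bidx) :
  cybe so3 lam (fun u v => rprime so3 (Amat so3 s0 s1 s2) (mk3 b00 b01 b02 b10 b11 b12 b20 b21 b22) (Amat so3 c0 c1 c2) u v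
  + Kt so3 lam al be t u v) x y z = 0.
Proof.
rewrite (@cybe_ext R so3 lam _ _ x y z (rtab_eq_so3 lam al be t s0 s1 s2 c0 c1 c2 b00 b01 b02 b10 b11 b12 b20 b21 b22)) key_so3.
by rewrite (restab0_so3 e1 e2 e3 e4) mulr0.
Qed.
Lemma core_so21 (R : realFieldType) (lam al be t s0 s1 s2 c0 c1 c2 b00 b01 b02 b10 b11 b12 b20 b21 b22 : R)
  (e1 : \tr ((Amat so21 s0 s1 s2) *m (Amat so21 s0 s1 s2)) / 2 - lam / 2 * (\tr (mk3 b00 b01 b02 b10 b11 b12 b20 b21 b22) ^+ 2 - \tr ((mk3 b00 b01 b02 b10 b11 b12 b20 b21 b22) *m (mk3 b00 b01 b02 b10 b11 b12 b20 b21 b22))) = ((al ^+ 2 + lam * be ^+ 2) * t ^+ 2) * lam)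
  (e2 : \tr ((Amat so21 c0 c1 c2) *m (mk3 b00 b01 b02 b10 b11 b12 b20 b21 b22)) = (- (2 * al * be) * t ^+ 2))
  (e3 : ((mk3 b00 b01 b02 b10 b11 b12 b20 b21 b22) - (\tr (mk3 b00 b01 b02 b10 b11 b12 b20 b21 b22))%:M) *m ((mk3 b00 b01 b02 b10 b11 b12 b20 b21 b22) + gtr so21 (mk3 b00 b01 b02 b10 b11 b12 b20 b21 b22))
        + ((\tr (mk3 b00 b01 b02 b10 b11 b12 b20 b21 b22) ^+ 2 - \tr ((mk3 b00 b01 b02 b10 b11 b12 b20 b21 b22) *m (mk3 b00 b01 b02 b10 b11 b12 b20 b21 b22))) / 2)%:M - (Amat so21 c0 c1 c2) *m (Amat so21 s0 s1 s2)
        + lam *: ((Amat so21 c0 c1 c2) *m (Amat so21 c0 c1 c2) - (\tr ((Amat so21 c0 c1 c2) *m (Amat so21 c0 c1 c2)) / 2)%:M)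
        = - (((al ^+ 2 + lam * be ^+ 2) * t ^+ 2))%:M)
  (e4 : - ((Amat so21 s0 s1 s2) *m ((mk3 b00 b01 b02 b10 b11 b12 b20 b21 b22) + gtr so21 (mk3 b00 b01 b02 b10 b11 b12 b20 b21 b22))) + (gtr so21 (mk3 b00 b01 b02 b10 b11 b12 b20 b21 b22) - (\tr (mk3 b00 b01 b02 b10 b11 b12 b20 b21 b22))%:M) *m (lam *: (Amat so21 c0 c1 c2) - (Amat so21 s0 s1 s2))
        - (\tr ((Amat so21 s0 s1 s2) *m (mk3 b00 b01 b02 b10 b11 b12 b20 b21 b22)))%:M
        = - (lam * (- (2 * al * be) * t ^+ 2))%:M) (x y z : bidx) :
  cybe so21 lam (fun u v => rprime so21 (Amat so21 s0 s1 s2) (mk3 b00 b01 b02 b10 b11 b12 b20 b21 b22) (Amat so21 c0 c1 c2) u v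
  + Kt so21 lam al be t u v) x y z = 0.
Proof.
rewrite (@cybe_ext R so21 lam _ _ x y z (rtab_eq_so21 lam al be t s0 s1 s2 c0 c1 c2 b00 b01 b02 b10 b11 b12 b20 b21 b22)) key_so21.
by rewrite (restab0_so21 e1 e2 e3 e4) mulr0.
Qed.

Unset Implicit Arguments. Set Strict Implicit.
Theorem mainTheorem1 (R : realFieldType) (g : galg) (lam al be : R)
  (A B C : 'M[R]_3)
  (htt : al ^+ 2 - lam * be ^+ 2 != 0)
  (hA : gtr g A = - A) (hC : gtr g C = - C)
  (e1 : \tr (A *m A) / 2 - lam / 2 * (\tr B ^+ 2 - \tr (B *m B)) = mu lam al be * lam)
  (e2 : \tr (C *m B) = nu lam al be)
  (e3 : (B - (\tr B)%:M) *m (B + gtr g B)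
        + ((\tr B ^+ 2 - \tr (B *m B)) / 2)%:M - C *m A
        + lam *: (C *m C - (\tr (C *m C) / 2)%:M)
        = - (mu lam al be)%:M)
  (e4 : - (A *m (B + gtr g B)) + (gtr g B - (\tr B)%:M) *m (lam *: C - A)
        - (\tr (A *m B))%:M
        = - (lam * nu lam al be)%:M) :
  forall x y z : bidx,
    cybe g lam (fun u v => rprime g A B C u v + Ktau g lam al be u v) x y z = 0.
Proof.
move=> x y z.
pose t := (al ^+ 2 - lam * be ^+ 2)^-1.
have Emu : mu lam al be = (al ^+ 2 + lam * be ^+ 2) * t ^+ 2 by rewrite /mu /t exprVn.
have Enu : nu lam al be = - (2 * al * be) * t ^+ 2 by rewrite /nu /t exprVn.
rewrite Emu in e1 e3; rewrite Enu in e2 e4.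
have HB := mk3P B.
case: g hA hC e1 e2 e3 e4 => hA hC e1 e2 e3 e4.
{
  have HA : A = Amat so3 (Defs.eta R so3 o1 * A o1 o2) (- A o0 o2) (A o0 o1).
    rewrite /gtr invmx_etaM etaM_mk3 (mk3P A) mk3_trmx !(mk3_mul, mk3_opp) ?eta_so3 in hA.
    case/mk3_inj: hA => [[h00 h01 h02] [h10 h11 h12] [h20 h21 h22]].
    rewrite {1}(mk3P A) /Amat ?eta_so3; f_equal; lra.
  have HC : C = Amat so3 (Defs.eta R so3 o1 * C o1 o2) (- C o0 o2) (C o0 o1).
    rewrite /gtr invmx_etaM etaM_mk3 (mk3P C) mk3_trmx !(mk3_mul, mk3_opp) ?eta_so3 in hC.
    case/mk3_inj: hC => [[h00 h01 h02] [h10 h11 h12] [h20 h21 h22]].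
    rewrite {1}(mk3P C) /Amat ?eta_so3; f_equal; lra.
  rewrite HA HC HB in e1 e2 e3 e4; rewrite HA HC HB.
  exact: (core_so3 e1 e2 e3 e4 x y z).
}
{
  have HA : A = Amat so21 (Defs.eta R so21 o1 * A o1 o2) (- A o0 o2) (A o0 o1).
    rewrite /gtr invmx_etaM etaM_mk3 (mk3P A) mk3_trmx !(mk3_mul, mk3_opp) ?eta_so21 in hA.
    case/mk3_inj: hA => [[h00 h01 h02] [h10 h11 h12] [h20 h21 h22]].
    rewrite {1}(mk3P A) /Amat ?eta_so21; f_equal; lra.
  have HC : C = Amat so21 (Defs.eta R so21 o1 * C o1 o2) (- C o0 o2) (C o0 o1).
    rewrite /gtr invmx_etaM etaM_mk3 (mk3P C) mk3_trmx !(mk3_mul, mk3_opp) ?eta_so21 in hC.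
    case/mk3_inj: hC => [[h00 h01 h02] [h10 h11 h12] [h20 h21 h22]].
    rewrite {1}(mk3P C) /Amat ?eta_so21; f_equal; lra.
  rewrite HA HC HB in e1 e2 e3 e4; rewrite HA HC HB.
  exact: (core_so21 e1 e2 e3 e4 x y z).
}
Qed.
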